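(* Let $\mathcal{H}$ be a separable Hilbert space, let $J$ be a finite or countably infinite index set, and let $(\rho_j)_{j\in J}$ be density operators on $\mathcal{H}$. Let $f:(0,1]^J\to\mathbb{R}$ be an evaluation function for uniform discrimination (defined in the context). Suppose the instrument $(\mathcal{I}_\omega)_{\omega\in J\cup\{?\}}$ is a uniform unambiguous discrimination measurement between $(\rho_j)_{j\in J}$ that is optimal with respect to $f$, and suppose that $\sup\{\operatorname{tr}[\mathcal{I}_j\rho_j]\mid j\in J\}<1$. Then the states $$\left(\frac{\mathcal{I}_?\rho_j}{\operatorname{tr}[\mathcal{I}_?\rho_j]}\right)_{j\in J}$$ (the post-measurement states conditioned on the inconclusive outcome $?$) are not uniformly distinguishable.
   Context: States are density operators $\rho$ on $\mathcal{H}$: trace-class operators with $\rho\geq 0$ and $\operatorname{tr}\rho=1$; $\mathfrak{T}(\mathcal{H})$ denotes the Banach space of trace-class operators. An instrument with countable outcome set $\Omega$ is a family $(\mathcal{I}_\omega)_{\omega\in\Omega}$ of trace-norm-bounded linear maps $\mathcal{I}_\omega:\mathfrak{T}(\mathcal{H})\to\mathfrak{T}(\mathcal{H})$ such that each $\mathcal{I}_\omega$ is completely positive (i.e. $\mathcal{I}_\omega\otimes\mathrm{id}_{\mathbb{C}^{n\times n}}$ is positive for all $n\in\mathbb{N}$) and $\operatorname{tr}[(\sum_\omega\mathcal{I}_\omega)\rho]=\operatorname{tr}\rho$ for all $\rho\in\mathfrak{T}(\mathcal{H})$. A uniform unambiguous discrimination measurement between states $(\rho_j)_{j\in J}$ is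 an instrument $(\mathcal{I}_\omega)_{\omega\in J\cup\{?\}}$ (with $?$ an extra ''inconclusive'' outcome not in $J$) such that $\operatorname{tr}[\mathcal{I}_j\rho_k]=0$ for all $j\neq k$ in $J$, and $\inf\{\operatorname{tr}[\mathcal{I}_j\rho_j]\mid j\in J\}>0$. States $(\rho_j)_{j\in J}$ are uniformly distinguishable if at least one uniform unambiguous discrimination measurement between them exists. An evaluation function for uniform discrimination is a function $f:(0,1]^J\to\mathbb{R}$ such that for all $(x_j),(y_j)\in(0,1]^J$, if $\inf\{x_j-y_j\mid j\in J\}>0$ then $f((x_j))-f((y_j))>0$. A uniform unambiguous discrimination measurement between $(\rho_j)_{j\in J}$ is optimal with respect to $f$ if no other uniform unambiguous discrimination measurement $(\mathcal{I}'_\omega)$ between $(\rho_j)_{j\in J}$ satisfies $f((\operatorname{tr}[\mathcal{I}'_j\rho_j])_j)>f((\operatorname{tr}[\mathcal{I}_j\rho_j])_j)$. *)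

(* Defs.v *)
From mathcomp Require Import all_boot all_order all_algebra.
From mathcomp Require Import all_classical all_reals all_analysis.
From mathcomp Require Export complex.
Import Order.TTheory GRing.Theory Num.Theory.
Import numFieldNormedType.Exports.
Set Implicit Arguments. Unset Strict Implicit. Unset Printing Implicit Defensive.
Local Open Scope classical_set_scope.
Local Open Scope ring_scope.

Section QuantumDefs.
Variable R : realType.
Local Notation C := R[i].

Definition cabs (z : C) : R :=
  Num.sqrt (complex.Re z ^+ 2 + complex.Im z ^+ 2).

Definition rseries_to (u : nat -> R) (s : R) : Prop :=
  (fun N => \sum_(0 <= n < N) u n) @ \oo --> s.
Definition rsum (u : nat -> R) : R := limn (fun N => \sum_(0 <= n < N) u n).

Definition cseries_to (a : nat -> C) (s : C) : Prop :=
  rseries_to (fun n => complex.Re (a n)) (complex.Re s) /\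
  rseries_to (fun n => complex.Im (a n)) (complex.Im s).
Definition csum (a : nat -> C) : C :=
  Complex (rsum (fun n => complex.Re (a n))) (rsum (fun n => complex.Im (a n))).
Definition cabs_summable (a : nat -> C) : Prop :=
  exists M : R, forall N, \sum_(0 <= n < N) cabs (a n) <= M.

(* Every separable Hilbert space is unitarily isomorphic to l^2(K) with
   K = {0,..,d-1} (d = its dimension) or K = nat. *)
Definition vec := nat -> C.

Definition in_l2 (K : set nat) (v : vec) : Prop :=
  (forall i, ~ K i -> v i = 0) /\
  exists M : R, forall N, \sum_(0 <= i < N) cabs (v i) ^+ 2 <= M.

Definition l2norm (v : vec) : R := Num.sqrt (rsum (fun i => cabs (v i) ^+ 2)).

Definition mat := nat -> nat -> C.

(* A = sum_n |x_n><y_n| with sum_n ||x_n|| ||y_n|| < oo (nuclear representation) *)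
Definition nuclear_rep (K : set nat) (A : mat) (x y : nat -> vec) : Prop :=
  (forall n, in_l2 K (x n)) /\ (forall n, in_l2 K (y n)) /\
  (exists M : R, forall N, \sum_(0 <= n < N) l2norm (x n) * l2norm (y n) <= M) /\
  (forall i j, cseries_to (fun n => x n i * conjc (y n j)) (A i j)).

Definition trace_class (K : set nat) (A : mat) : Prop :=
  exists x y, nuclear_rep K A x y.

Definition trace_norm (K : set nat) (A : mat) : R :=
  inf [set t : R | exists x y, nuclear_rep K A x y /\
                    t = rsum (fun n => l2norm (x n) * l2norm (y n))].

Definition tr (A : mat) : C := csum (fun i => A i i).

(* positivity <v, A v> >= 0, tested on the dense set of finitely supported v *)
Definition positive_op (A : mat) : Prop :=
  forall (N : nat) (v : vec),
    0 <= \sum_(0 <= i < N) \sum_(0 <= j < N) conjc (v i) * A i j * v j.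

Definition density (K : set nat) (rho : mat) : Prop :=
  trace_class K rho /\ positive_op rho /\ tr rho = 1.

Definition opscale (c : C) (A : mat) : mat := fun i j => c * A i j.
Definition opadd (A B : mat) : mat := fun i j => A i j + B i j.

Definition op := mat -> mat.

(* T(H (x) C^n) = n x n block matrices with trace-class blocks;
   positivity of such a block operator *)
Definition positive_block (n : nat) (B : 'I_n -> 'I_n -> mat) : Prop :=
  forall (N : nat) (v : 'I_n -> vec),
    0 <= \sum_(a < n) \sum_(b < n) \sum_(0 <= i < N) \sum_(0 <= j < N)
            conjc (v a i) * B a b i j * v b j.

(* I (x) id_{C^{n x n}} is positive for every n *)
Definition completely_positive (K : set nat) (I : op) : Prop :=
  forall (n : nat) (B : 'I_n -> 'I_n -> mat),
    (forall a b, trace_class K (B a b)) ->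
    positive_block B -> positive_block (fun a b => I (B a b)).

Definition bounded_cp_map (K : set nat) (I : op) : Prop :=
  (forall A, trace_class K A -> trace_class K (I A)) /\
  (forall A B, trace_class K A -> trace_class K B ->
     I (opadd A B) = opadd (I A) (I B)) /\
  (forall (c : C) A, trace_class K A -> I (opscale c A) = opscale c (I A)) /\
  (exists c : R, forall A, trace_class K A ->
     trace_norm K (I A) <= c * trace_norm K (A)) /\
  completely_positive K I.

(* sum over a countable type, enumerated injectively through pickle *)
Definition enum_seq (W : countType) (g : W -> C) : nat -> C :=
  fun n => match (@pickle_inv W n) with Some w => g w | None => 0 end.

(* instrument with countable outcome set W:
   tr[(sum_w I_w) rho] = tr rho for every rho in T(H), the sum over W
   converging (absolutely, i.e. unconditionally) *)
Definition instrument (K : set nat) (W : countType) (I : W -> op) : Prop :=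
  (forall w, bounded_cp_map K (I w)) /\
  (forall rho, trace_class K rho ->
     cabs_summable (enum_seq (fun w => tr (I w rho))) /\
     cseries_to (enum_seq (fun w => tr (I w rho))) (tr rho)).

(* outcome set J u {?}  modelled as option J, with None = ? *)
Definition uud_measurement (K : set nat) (J : countType) (rho : J -> mat)
    (I : option J -> op) : Prop :=
  instrument K I /\
  (forall j k : J, j <> k -> tr (I (Some j) (rho k)) = 0) /\
  (exists c : R, 0 < c /\ forall j, c%:C%C <= tr (I (Some j) (rho j))).

Definition uniformly_distinguishable (K : set nat) (J : countType)
    (rho : J -> mat) : Prop :=
  exists I : option J -> op, uud_measurement K rho I.

(* success probabilities tr[I_j rho_j] (real for these measurements) *)
Definition success (J : countType) (rho : J -> mat) (I : option J -> op)
  : J -> R := fun j => complex.Re (tr (I (Some j) (rho j))).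

Definition evaluation_function (J : countType) (f : (J -> R) -> R) : Prop :=
  forall x y : J -> R,
    (forall j, 0 < x j <= 1) -> (forall j, 0 < y j <= 1) ->
    (exists c : R, 0 < c /\ forall j, c <= x j - y j) ->
    0 < f x - f y.

Definition optimal_uud (K : set nat) (J : countType) (rho : J -> mat)
    (f : (J -> R) -> R) (I : option J -> op) : Prop :=
  uud_measurement K rho I /\
  ~ (exists I' : option J -> op, uud_measurement K rho I' /\
       f (success rho I') > f (success rho I)).

End QuantumDefs.

(* Main.v *)
Require Import Defs.
From mathcomp Require Import all_boot all_order all_algebra.
From mathcomp Require Import all_classical all_reals all_analysis.
From mathcomp Require Import complex.
From mathcomp Require Import ring lra.
Import Order.TTheory GRing.Theory Num.Theory.
Local Open Scope ring_scope.

Notation RE := complex.Re.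
Notation IM := complex.Im.

Section Helpers.
Import numFieldNormedType.Exports.
Local Open Scope classical_set_scope.
Local Open Scope complex_scope.
Set Implicit Arguments. Unset Strict Implicit. Unset Printing Implicit Defensive.

Section Basics.
Variable R : realType.
Local Notation C := R[i].

Definition psum (u : nat -> R) N := \sum_(0 <= n < N) u n.
Implicit Types (u v : nat -> R) (s a b : R).

Lemma rs_unique u s : rseries_to u s -> rsum u = s.
Proof. move=> h; exact: cvg_lim h. Qed.

Lemma rs_add u v a b : rseries_to u a -> rseries_to v b ->
  rseries_to (fun n => u n + v n) (a + b).
Proof.
move=> hu hv; rewrite /rseries_to.
under eq_fun do rewrite big_split.
exact: cvgD.
Qed.

Lemma rs_scale u a k : rseries_to u a -> rseries_to (fun n => k * u n) (k * a).
Proof.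
move=> hu; rewrite /rseries_to.
under eq_fun do rewrite -mulr_sumr.
exact: cvgMr.
Qed.

Lemma rs_ext u v s : (forall n, u n = v n) -> rseries_to u s -> rseries_to v s.
Proof. by move=> e; have -> : u = v by apply: funext. Qed.

Lemma psum_single n0 (a : R) N :
  \sum_(0 <= n < N) (if n == n0 then a else 0) = if (n0 < N)%N then a else 0.
Proof.
elim: N => [|N IH]; first by rewrite big_geq.
rewrite big_nat_recr //= IH.
case: (ltngtP n0 N) => [h|h|->].
- by rewrite ltnS ltnW // addr0.
- by rewrite ltnS leqNgt h addr0.
- by rewrite ltnSn add0r.
Qed.

Lemma rs_single n0 (a : R) : rseries_to (fun n => if n == n0 then a else 0) a.
Proof.
rewrite /rseries_to; apply: cvg_near_cst.
exists n0.+1 => // N /= hN.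
by rewrite psum_single hN.
Qed.

Lemma psum_nd u : (forall n, 0 <= u n) ->
  {homo psum u : n m / (n <= m)%N >-> n <= m}.
Proof.
move=> u0 n m nm; rewrite /psum (@big_cat_nat _ _ _ n 0 m _ _ (leq0n n) nm) /= lerDl.
by apply: sumr_ge0 => i _.
Qed.

Lemma rs_le_psum u s N : (forall n, 0 <= u n) -> rseries_to u s -> psum u N <= s.
Proof.
move=> u0 h; have <- : limn (psum u) = s by exact: cvg_lim h.
apply: nondecreasing_cvgn_le; first exact: psum_nd.
by apply/cvg_ex; exists s.
Qed.

Lemma rs_ge0 u s : (forall n, 0 <= u n) -> rseries_to u s -> 0 <= s.
Proof.
move=> u0 h; have := rs_le_psum 0 u0 h.
by rewrite /psum big_geq.
Qed.

Lemma rs_le_term u s k : (forall n, 0 <= u n) -> rseries_to u s -> u k <= s.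
Proof.
move=> u0 h; apply: le_trans (rs_le_psum k.+1 u0 h).
rewrite /psum big_nat_recr //= lerDr.
by apply: sumr_ge0 => i _.
Qed.

Lemma rs_le u s M : rseries_to u s -> (forall N, psum u N <= M) -> s <= M.
Proof.
move=> h hM; have <- : limn (psum u) = s by exact: cvg_lim h.
apply: limr_le; first by apply/cvg_ex; exists s.
by near=> N; apply: hM.
Unshelve. all: end_near.
Qed.

Lemma rs_nonneg_cvg u M : (forall n, 0 <= u n) -> (forall N, psum u N <= M) ->
  rseries_to u (rsum u).
Proof.
move=> u0 hM.
have : cvgn (psum u).
  apply: nondecreasing_is_cvgn; first exact: psum_nd.
  by exists M => _ [N _ <-].
by [].
Qed.

Lemma rs_abs_cvg u M : (forall N, psum (fun n => `|u n|) N <= M) ->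
  rseries_to u (rsum u).
Proof.
move=> hM.
have h1 : cvgn (psum (fun n => `|u n|)).
  apply: nondecreasing_is_cvgn; first by apply: psum_nd => n.
  by exists M => _ [N _ <-].
have h2 := @normed_cvg R R^o u h1.
exact: h2.
Qed.

End Basics.

Section Cplx.
Variable R : realType.
Local Notation C := R[i].
Implicit Types (u v : nat -> R) (a b z w : C) (p q : nat -> C).

Lemma ReD a b : RE (a + b) = RE a + RE b. Proof. by case: a => ? ?; case: b => ? ?. Qed.
Lemma ImD a b : IM (a + b) = IM a + IM b. Proof. by case: a => ? ?; case: b => ? ?. Qed.
Lemma ReN a : RE (- a) = - RE a. Proof. by case: a. Qed.
Lemma ImN a : IM (- a) = - IM a. Proof. by case: a. Qed.
Lemma ReM a b : RE (a * b) = RE a * RE b - IM a * IM b. Proof. by case: a => ? ?; case: b => ? ?. Qed.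
Lemma ImM a b : IM (a * b) = RE a * IM b + IM a * RE b.
Proof. case: a => x y; case: b => x' y' /=; by rewrite addrC. Qed.
Lemma Re0 : RE (0 : C) = 0. Proof. by []. Qed.
Lemma Im0 : IM (0 : C) = 0. Proof. by []. Qed.
Lemma ReR (r : R) : RE (r%:C : C) = r. Proof. by []. Qed.
Lemma ImR (r : R) : IM (r%:C : C) = 0. Proof. by []. Qed.
Lemma ReRM (r : R) a : RE (r%:C * a) = r * RE a.
Proof. by rewrite ReM /= mul0r subr0. Qed.
Lemma ImRM (r : R) a : IM (r%:C * a) = r * IM a.
Proof. by rewrite ImM /= mul0r addr0. Qed.
Lemma cE a : a = (RE a +i* IM a)%C. Proof. by case: a. Qed.
Lemma realC a : IM a = 0 -> a = (RE a)%:C.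
Proof. by case: a => x y /= ->. Qed.

Lemma cabsE z : `|z| = (cabs z)%:C.
Proof. by rewrite normc_def. Qed.
Lemma cabs_ge0 z : 0 <= cabs z. Proof. exact: sqrtr_ge0. Qed.
Lemma cabs_add a b : cabs (a + b) <= cabs a + cabs b.
Proof. by have := ler_normD a b; rewrite !cabsE -raddfD /= lecR. Qed.
Lemma cabs_mul a b : cabs (a * b) = cabs a * cabs b.
Proof. by have := normrM a b; rewrite !cabsE -rmorphM /= => /complexI. Qed.
Lemma cabs_conj a : cabs (conjc a) = cabs a.
Proof. by case: a => x y; rewrite /cabs /= sqrrN. Qed.
Lemma cabs0 : cabs 0 = 0 :> R.
Proof. by rewrite /cabs /= expr2 mul0r addr0 sqrtr0. Qed.
Lemma Re_le_cabs a : `|RE a| <= cabs a.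
Proof.
case: a => x y; rewrite /cabs /= -sqrtr_sqr ler_sqrt ?addr_ge0 ?sqr_ge0 //.
by rewrite lerDl sqr_ge0.
Qed.
Lemma Im_le_cabs a : `|IM a| <= cabs a.
Proof.
case: a => x y; rewrite /cabs /= -sqrtr_sqr ler_sqrt ?addr_ge0 ?sqr_ge0 //.
by rewrite lerDr sqr_ge0.
Qed.
Lemma cabsR (r : R) : cabs (r%:C) = `|r|.
Proof. by rewrite /cabs /= (expr2 (0:R)) mul0r addr0 sqrtr_sqr. Qed.
Lemma cabs_sqr z : cabs z ^+ 2 = RE z ^+ 2 + IM z ^+ 2.
Proof. by rewrite /cabs sqr_sqrtr // addr_ge0 ?sqr_ge0. Qed.

Lemma cs_unique p s : cseries_to p s -> csum p = s.
Proof. by case=> h1 h2; rewrite /csum (rs_unique h1) (rs_unique h2); case: s {h1 h2}. Qed.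

Lemma cs_add p q s t : cseries_to p s -> cseries_to q t ->
  cseries_to (fun n => p n + q n) (s + t).
Proof.
case=> h1 h2 [h3 h4]; split.
  by rewrite ReD; apply: rs_ext (rs_add h1 h3) => n; rewrite ReD.
by rewrite ImD; apply: rs_ext (rs_add h2 h4) => n; rewrite ImD.
Qed.

Lemma cs_scale p s c : cseries_to p s -> cseries_to (fun n => c * p n) (c * s).
Proof.
case=> h1 h2; split.
  rewrite ReM -mulNr; apply: (rs_ext _ (rs_add (rs_scale (k:=RE c) h1) (rs_scale (k:=- IM c) h2))) => n.
  by rewrite ReM mulNr.
rewrite ImM; apply: (rs_ext _ (rs_add (rs_scale (k:=RE c) h2) (rs_scale (k:=IM c) h1))) => n.
by rewrite ImM.
Qed.

Lemma cs_ext p q s : (forall n, p n = q n) -> cseries_to p s -> cseries_to q s.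
Proof. by move=> e; have -> : p = q by apply: funext. Qed.

Lemma cs_opp p s : cseries_to p s -> cseries_to (fun n => - p n) (- s).
Proof.
move=> h; have := cs_scale (-1) h; rewrite mulN1r.
by apply: cs_ext => n; rewrite mulN1r.
Qed.

Lemma cs_single n0 z : cseries_to (fun n => if n == n0 then z else 0) z.
Proof.
split.
  by apply: (rs_ext _ (@rs_single _ n0 (RE z))) => n; case: (n == n0).
by apply: (rs_ext _ (@rs_single _ n0 (IM z))) => n; case: (n == n0).
Qed.

Lemma psum_single_le n0 z N :
  psum (fun n => cabs (if n == n0 then z else 0)) N <= cabs z.
Proof.
have -> : (fun n => cabs (if n == n0 then z else 0)) =
          (fun n => if n == n0 then cabs z else 0).
  by apply: funext => n; case: (n == n0); rewrite ?cabs0.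
rewrite /psum psum_single; case: ifP => // _; exact: cabs_ge0.
Qed.

End Cplx.

Section Real2.
Variable R : realType.
Implicit Types (u v : nat -> R) (s a b : R).

Lemma half_oo : (fun K => K./2) @ \oo --> \oo.
Proof.
move=> P [N _ HN]; exists N.*2 => // K /= hK; apply: HN => /=.
by have := half_leq hK; rewrite doubleK.
Qed.

Lemma uphalf_oo : (fun K => uphalf K) @ \oo --> \oo.
Proof.
move=> P [N _ HN]; exists N.*2 => // K /= hK; apply: HN => /=.
have := half_leq hK; rewrite doubleK => h; apply: leq_trans h _.
by rewrite uphalf_half leq_addl.
Qed.

Definition il (T : Type) (p q : nat -> T) (k : nat) : T :=
  if odd k then q k./2 else p k./2.

Lemma il_psum u v K : \sum_(0 <= k < K) il u v k =
  \sum_(0 <= n < uphalf K) u n + \sum_(0 <= n < K./2) v n.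
Proof.
elim: K => [|K IH]; first by rewrite /= !big_geq // addr0.
rewrite big_nat_recr //= IH /il.
rewrite uphalf_half; case: (odd K) => /=; rewrite ?add1n ?add0n !big_nat_recr //=; ring.
Qed.

Lemma rs_il u v a b : rseries_to u a -> rseries_to v b ->
  rseries_to (il u v) (a + b).
Proof.
move=> hu hv; rewrite /rseries_to.
under eq_fun do rewrite il_psum.
apply: cvgD.
  exact: (cvg_comp _ _ uphalf_oo hu).
exact: (cvg_comp _ _ half_oo hv).
Qed.

Lemma il_map (T U : Type) (F : T -> U) p q k : F (il p q k) = il (F \o p) (F \o q) k.
Proof. by rewrite /il; case: (odd k). Qed.

Lemma lim_le_bound (w : nat -> R) l M : w @ \oo --> l -> (forall m, w m <= M) -> l <= M.
Proof.
move=> h hM; have <- : limn w = l by exact: cvg_lim h.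
apply: limr_le; first by apply/cvg_ex; exists l.
by near=> m; apply: hM.
Unshelve. all: end_near.
Qed.

Lemma cvg_finsum (F : nat -> nat -> R) (l : nat -> R) N :
  (forall i, F i @ \oo --> l i) ->
  (fun m => \sum_(0 <= i < N) F i m) @ \oo --> \sum_(0 <= i < N) l i.
Proof.
move=> h; elim: N => [|N IH].
  rewrite big_geq //; under eq_fun do rewrite big_geq //; exact: cvg_cst.
rewrite big_nat_recr //=; under eq_fun do rewrite big_nat_recr //=.
exact: cvgD.
Qed.

Lemma term_le_psum u N i : (forall n, 0 <= u n) -> (i < N)%N -> u i <= psum u N.
Proof.
move=> u0 iN; apply: le_trans (psum_nd u0 iN).
by rewrite /psum big_nat_recr //= lerDr; apply: sumr_ge0.
Qed.

Lemma CS (a b : nat -> R) N :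
  (\sum_(0 <= i < N) a i * b i) ^+ 2 <=
  (\sum_(0 <= i < N) a i ^+ 2) * (\sum_(0 <= i < N) b i ^+ 2).
Proof.
set S := \sum_(0 <= i < N) a i * b i.
set A := \sum_(0 <= i < N) a i ^+ 2.
set B := \sum_(0 <= i < N) b i ^+ 2.
have quad t : 0 <= t ^+ 2 * A - t *+ 2 * S + B.
  have -> : t ^+ 2 * A - t *+ 2 * S + B = \sum_(0 <= i < N) (a i * t - b i) ^+ 2.
    rewrite /A /S /B mulr_sumr mulr_sumr -sumrN -!big_split /=.
    by apply: eq_bigr => i _; ring.
  by apply: sumr_ge0 => i _; rewrite sqr_ge0.
have A0 : 0 <= A by apply: sumr_ge0 => i _; rewrite sqr_ge0.
case: (eqVneq A 0) => [Az|Anz].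
  have a0 : forall i, (i < N)%N -> a i = 0.
    move=> i iN; apply/eqP; rewrite -sqrf_eq0 eq_le sqr_ge0 andbT.
    rewrite -Az; exact: (@term_le_psum (fun i => a i ^+ 2) N i (fun n => sqr_ge0 _) iN).
  have -> : S = 0.
    rewrite /S big_nat_cond big1 // => i /andP[/andP[_ iN] _].
    by rewrite a0 // mul0r.
  by rewrite Az expr2 !mul0r.
have Ap : 0 < A by rewrite lt_def Anz A0.
have := quad (S / A).
have -> : (S / A) ^+ 2 * A - (S / A) *+ 2 * S + B = B - S ^+ 2 / A.
  by field.
rewrite subr_ge0 ler_pdivrMr // mulrC.
by [].
Qed.

End Real2.

Section TC.
Variable R : realType.
Local Notation C := R[i].
Implicit Types (K : set nat) (v x y : vec R) (A B : mat R).

Lemma l2_ge0 v : 0 <= l2norm v. Proof. exact: sqrtr_ge0. Qed.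

Lemma l2_sum_le K v N : in_l2 K v ->
  \sum_(0 <= i < N) cabs (v i) ^+ 2 <= l2norm v ^+ 2.
Proof.
case=> _ [M hM].
have u0 : forall n, 0 <= cabs (v n) ^+ 2 by move=> n; rewrite sqr_ge0.
have h := @rs_nonneg_cvg R (fun i => cabs (v i) ^+ 2) M u0 hM.
rewrite /l2norm sqr_sqrtr; last exact: rs_ge0 u0 h.
exact: (rs_le_psum N u0 h).
Qed.

Lemma cs_l2 K x y N : in_l2 K x -> in_l2 K y ->
  \sum_(0 <= i < N) cabs (x i) * cabs (y i) <= l2norm x * l2norm y.
Proof.
move=> hx hy.
have S0 : 0 <= \sum_(0 <= i < N) cabs (x i) * cabs (y i).
  by apply: sumr_ge0 => i _; rewrite mulr_ge0 ?cabs_ge0.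
rewrite -(@ler_pXn2r _ 2) // ?nnegrE ?mulr_ge0 ?l2_ge0 //.
apply: le_trans (CS _ _ _) _.
rewrite exprMn; apply: ler_pM.
- by apply: sumr_ge0 => i _; rewrite sqr_ge0.
- by apply: sumr_ge0 => i _; rewrite sqr_ge0.
- exact: l2_sum_le hx.
- exact: l2_sum_le hy.
Qed.

Lemma nuc_bound K A (x y : nat -> vec R) : nuclear_rep K A x y ->
  exists M, forall N, psum (fun i => `|RE (A i i)|) N <= M /\
                      psum (fun i => `|IM (A i i)|) N <= M.
Proof.
case=> hx [hy [[M hM] hs]].
exists M => N; rewrite /psum.
have key : forall m, \sum_(0 <= i < N) \sum_(0 <= n < m) cabs (x n i) * cabs (y n i) <= M.
  move=> m; apply: le_trans (hM m).
  rewrite exchange_big_nat; apply: ler_sum => n _; exact: cs_l2.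
split.
  have hcv := @cvg_finsum R (fun i m => `|\sum_(0 <= n < m) RE (x n i * conjc (y n i))|)
                (fun i => `|RE (A i i)|) N (fun i => cvg_norm (hs i i).1).
  apply: (lim_le_bound (hcv _)) => m; apply: le_trans (key m).
  apply: ler_sum => i _; apply: le_trans (ler_norm_sum _ _ _) _.
  apply: ler_sum => n _; apply: le_trans (Re_le_cabs _) _.
  by rewrite cabs_mul cabs_conj.
have hcv := @cvg_finsum R (fun i m => `|\sum_(0 <= n < m) IM (x n i * conjc (y n i))|)
              (fun i => `|IM (A i i)|) N (fun i => cvg_norm (hs i i).2).
apply: (lim_le_bound (hcv _)) => m; apply: le_trans (key m).
apply: ler_sum => i _; apply: le_trans (ler_norm_sum _ _ _) _.
apply: ler_sum => n _; apply: le_trans (Im_le_cabs _) _.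
by rewrite cabs_mul cabs_conj.
Qed.

Lemma tc_diag K A : trace_class K A -> cseries_to (fun i => A i i) (tr A).
Proof.
case=> x [y rep]; have [M hM] := nuc_bound rep.
split.
  exact: (@rs_abs_cvg R (fun i => RE (A i i)) M (fun N => (hM N).1)).
exact: (@rs_abs_cvg R (fun i => IM (A i i)) M (fun N => (hM N).2)).
Qed.

Lemma tr_add K A B : trace_class K A -> trace_class K B ->
  tr (opadd A B) = tr A + tr B.
Proof.
move=> hA hB; apply: cs_unique.
exact: (cs_add (tc_diag hA) (tc_diag hB)).
Qed.

Lemma tr_scale K c A : trace_class K A -> tr (opscale c A) = c * tr A.
Proof.
move=> hA; apply: cs_unique.
exact: (cs_scale c (tc_diag hA)).
Qed.

Lemma sum_last (F : nat -> C) i : (forall k, (k < i)%N -> F k = 0) ->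
  \sum_(0 <= k < i.+1) F k = F i.
Proof.
move=> h; rewrite big_nat_recr //= big_nat_cond big1 ?add0r //.
by move=> k /andP[/andP[_ ki] _]; apply: h.
Qed.

Lemma pos_diag A i : positive_op A -> 0 <= A i i.
Proof.
move=> hA; have := hA i.+1 (fun k => if k == i then 1 else 0).
rewrite sum_last; last first.
  move=> k ki; rewrite (ltn_eqF ki) conjc0; apply: big1 => l _.
  by rewrite !mul0r.
rewrite sum_last; last by move=> l li; rewrite (ltn_eqF li) mulr0.
by rewrite eqxx conjc1 mul1r mulr1.
Qed.

Lemma pos_tr K A : positive_op A -> trace_class K A -> 0 <= RE (tr A).
Proof.
move=> hA htc; have [h _] := tc_diag htc.
apply: rs_ge0 _ h => n.
by have := pos_diag n hA; rewrite lecE => /andP[_].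
Qed.

End TC.

Section TC2.
Variable R : realType.
Local Notation C := R[i].
Implicit Types (K : set nat) (v : vec R) (A B : mat R) (x y : nat -> vec R).

Lemma cs_il (p q : nat -> C) s t : cseries_to p s -> cseries_to q t ->
  cseries_to (il p q) (s + t).
Proof.
case=> h1 h2 [h3 h4]; split.
  rewrite ReD; apply: (rs_ext _ (rs_il h1 h3)) => n.
  by rewrite /il; case: (odd n).
rewrite ImD; apply: (rs_ext _ (rs_il h2 h4)) => n.
by rewrite /il; case: (odd n).
Qed.

Definition nsum x y := rsum (fun n => l2norm (x n) * l2norm (y n)).

Lemma rep_cvg K A x y : nuclear_rep K A x y ->
  rseries_to (fun n => l2norm (x n) * l2norm (y n)) (nsum x y).
Proof.
case=> _ [_ [[M hM] _]].
apply: (@rs_nonneg_cvg R _ M) => // n.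
by rewrite mulr_ge0 ?l2_ge0.
Qed.

Lemma rep_ge0 K A x y : nuclear_rep K A x y -> 0 <= nsum x y.
Proof.
move=> h; apply: rs_ge0 _ (rep_cvg h) => n.
by rewrite mulr_ge0 ?l2_ge0.
Qed.

Definition tnset K A := [set t : R | exists x y, nuclear_rep K A x y /\
                    t = rsum (fun n => l2norm (x n) * l2norm (y n))].

Lemma tnset_lb K A : has_lbound (tnset K A).
Proof. by exists 0 => t [x [y [h ->]]]; exact: rep_ge0 h. Qed.

Lemma tn_ge0 K A : trace_class K A -> 0 <= trace_norm K A.
Proof.
case=> x [y h]; apply: lb_le_inf.
  by exists (nsum x y); exists x, y.
by move=> t [x' [y' [h' ->]]]; exact: rep_ge0 h'.
Qed.

Lemma tn_le K A x y : nuclear_rep K A x y -> trace_norm K A <= nsum x y.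
Proof.
move=> h; apply: (ge_inf (tnset_lb K A)).
by exists x, y.
Qed.

Lemma rep_add K A B x y x' y' : nuclear_rep K A x y -> nuclear_rep K B x' y' ->
  nuclear_rep K (opadd A B) (il x x') (il y y') /\
  nsum (il x x') (il y y') = nsum x y + nsum x' y'.
Proof.
move=> hA hB.
have cA := rep_cvg hA; have cB := rep_cvg hB.
have e : (fun n => l2norm (il x x' n) * l2norm (il y y' n)) =
   il (fun n => l2norm (x n) * l2norm (y n)) (fun n => l2norm (x' n) * l2norm (y' n)).
  by apply: funext => n; rewrite /il; case: (odd n).
case: hA => hx [hy [[M hM] hs]]; case: hB => hx' [hy' [[M' hM'] hs']].
split; last first.
  by rewrite /nsum e; apply: rs_unique; apply: rs_il.
split; first by move=> n; rewrite /il; case: (odd n).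
split; first by move=> n; rewrite /il; case: (odd n).
split.
  exists (M + M') => N.
  have -> : \sum_(0 <= n < N) l2norm (il x x' n) * l2norm (il y y' n) =
    \sum_(0 <= n < N) il (fun n => l2norm (x n) * l2norm (y n)) (fun n => l2norm (x' n) * l2norm (y' n)) n.
    by apply: eq_bigr => k _; rewrite /il; case: (odd k).
  rewrite il_psum.
  by apply: lerD; [apply: hM | apply: hM'].
move=> i j.
apply: (cs_ext _ (cs_il (hs i j) (hs' i j))) => n.
by rewrite /il; case: (odd n).
Qed.

Lemma tc_add K A B : trace_class K A -> trace_class K B -> trace_class K (opadd A B).
Proof.
move=> [x [y hA]] [x' [y' hB]].
by exists (il x x'), (il y y'); case: (rep_add hA hB).
Qed.

Lemma tn_add K A B : trace_class K A -> trace_class K B ->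
  trace_norm K (opadd A B) <= trace_norm K A + trace_norm K B.
Proof.
move=> tA tB; apply/ler_addgt0Pr => e e0.
have e2 : 0 < e / 2 by rewrite divr_gt0.
have hinf : forall D, trace_class K D -> has_inf (tnset K D).
  move=> D [x [y h]]; split; last exact: tnset_lb.
  by exists (nsum x y); exists x, y.
have [ta [x [y [hA ->]]] lta] := inf_adherent e2 (hinf _ tA).
have [tb [x' [y' [hB ->]]] ltb] := inf_adherent e2 (hinf _ tB).
have [hAB eAB] := rep_add hA hB.
apply: le_trans (tn_le hAB) _; rewrite eAB.
have -> : trace_norm K A + trace_norm K B + e =
          (trace_norm K A + e / 2) + (trace_norm K B + e / 2).
  by rewrite addrACA -splitr.
by apply: lerD; apply: ltW.
Qed.

Lemma l2_scale K c v : in_l2 K v ->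
  in_l2 K (fun i => c * v i) /\ l2norm (fun i => c * v i) = cabs c * l2norm v.
Proof.
case=> hz [M hM].
have u0 : forall n, 0 <= cabs (v n) ^+ 2 by move=> n; rewrite sqr_ge0.
have hc := @rs_nonneg_cvg R (fun i => cabs (v i) ^+ 2) M u0 hM.
have e : (fun i => cabs (c * v i) ^+ 2) = (fun i => cabs c ^+ 2 * cabs (v i) ^+ 2).
  by apply: funext => i; rewrite cabs_mul exprMn.
split.
  split; first by move=> i /hz ->; rewrite mulr0.
  exists (cabs c ^+ 2 * M) => N.
  have -> : \sum_(0 <= i < N) cabs (c * v i) ^+ 2 = cabs c ^+ 2 * \sum_(0 <= i < N) cabs (v i) ^+ 2.
    by rewrite mulr_sumr; apply: eq_bigr => i _; rewrite cabs_mul exprMn.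
  by apply: ler_wpM2l; [rewrite sqr_ge0 | apply: hM].
rewrite /l2norm e (rs_unique (rs_scale (k := cabs c ^+ 2) hc)).
rewrite sqrtrM ?sqr_ge0 // sqrtr_sqr ger0_norm //; exact: cabs_ge0.
Qed.

Lemma tc_scale K c A : trace_class K A -> trace_class K (opscale c A).
Proof.
case=> x [y [hx [hy [[M hM] hs]]]].
exists (fun n i => c * x n i), y.
split; first by move=> n; case: (l2_scale c (hx n)).
split => //.
split.
  exists (cabs c * M) => N.
  have -> : \sum_(0 <= n < N) l2norm (fun i => c * x n i) * l2norm (y n) =
            cabs c * \sum_(0 <= n < N) l2norm (x n) * l2norm (y n).
    rewrite mulr_sumr; apply: eq_bigr => n _.
    by case: (l2_scale c (hx n)) => _ ->; rewrite mulrA.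
  by apply: ler_wpM2l; [exact: cabs_ge0 | apply: hM].
move=> i j; apply: (cs_ext _ (cs_scale c (hs i j))) => n.
by rewrite mulrA.
Qed.

End TC2.

Section CP.
Variable R : realType.
Local Notation C := R[i].
Implicit Types (K : set nat) (A B : mat R) (I : op R).

Lemma pb_from_op A : positive_op A -> positive_block (fun _ _ : 'I_1 => A).
Proof. by move=> h N v; rewrite !big_ord1; apply: h. Qed.

Lemma op_from_pb A : positive_block (fun _ _ : 'I_1 => A) -> positive_op A.
Proof. by move=> h N w; have := h N (fun _ => w); rewrite !big_ord1. Qed.

Lemma cp_pos K I A : bounded_cp_map K I -> trace_class K A -> positive_op A ->
  positive_op (I A).
Proof.
case=> _ [_ [_ [_ cp]]] tA pA.
apply: op_from_pb.
exact: (cp 1%N (fun _ _ => A) (fun _ _ => tA) (pb_from_op pA)).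
Qed.

Lemma pb_add n (B1 B2 : 'I_n -> 'I_n -> mat R) :
  positive_block B1 -> positive_block B2 ->
  positive_block (fun a b => opadd (B1 a b) (B2 a b)).
Proof.
move=> h1 h2 N v.
have -> : \sum_(a < n) \sum_(b < n) \sum_(0 <= i < N) \sum_(0 <= j < N)
     (v a i)^*%C * opadd (B1 a b) (B2 a b) i j * v b j =
   \sum_(a < n) \sum_(b < n) \sum_(0 <= i < N) \sum_(0 <= j < N)
     (v a i)^*%C * B1 a b i j * v b j +
   \sum_(a < n) \sum_(b < n) \sum_(0 <= i < N) \sum_(0 <= j < N)
     (v a i)^*%C * B2 a b i j * v b j.
  rewrite -big_split; apply: eq_bigr => a _.
  rewrite -big_split; apply: eq_bigr => b _.
  rewrite -big_split; apply: eq_bigr => i _.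
  rewrite -big_split; apply: eq_bigr => j _.
  by rewrite /opadd mulrDr mulrDl.
by apply: addr_ge0; [apply: h1 | apply: h2].
Qed.

Lemma bcp_bound K I : bounded_cp_map K I ->
  exists c, 0 <= c /\ forall A, trace_class K A -> trace_norm K (I A) <= c * trace_norm K A.
Proof.
case=> h1 [_ [_ [[c hc] _]]].
exists (Num.max c 0); split; first by rewrite le_max lexx orbT.
move=> A tA; apply: le_trans (hc A tA) _.
by apply: ler_wpM2r; [exact: tn_ge0 | rewrite le_max lexx].
Qed.

Lemma bcp_comp K I1 I2 : bounded_cp_map K I1 -> bounded_cp_map K I2 ->
  bounded_cp_map K (fun X => I2 (I1 X)).
Proof.
move=> b1 b2.
have [c1 [c10 hc1]] := bcp_bound b1; have [c2 [c20 hc2]] := bcp_bound b2.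
case: b1 => t1 [a1 [s1 [_ cp1]]]; case: b2 => t2 [a2 [s2 [_ cp2]]].
split; first by move=> A tA; apply: t2; apply: t1.
split; first by move=> A B tA tB; rewrite a1 // a2 //; apply: t1.
split; first by move=> c A tA; rewrite s1 // s2 //; apply: t1.
split.
  exists (c2 * c1) => A tA; apply: le_trans (hc2 _ (t1 _ tA)) _.
  by rewrite -mulrA; apply: ler_wpM2l => //; apply: hc1.
move=> n B tB pB.
apply: (cp2 n (fun a b => I1 (B a b))); first by move=> a b; apply: t1.
exact: cp1.
Qed.

Lemma bcp_sum K I1 I2 : bounded_cp_map K I1 -> bounded_cp_map K I2 ->
  bounded_cp_map K (fun X => opadd (I1 X) (I2 X)).
Proof.
move=> b1 b2.
have [c1 [c10 hc1]] := bcp_bound b1; have [c2 [c20 hc2]] := bcp_bound b2.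
case: b1 => t1 [a1 [s1 [_ cp1]]]; case: b2 => t2 [a2 [s2 [_ cp2]]].
split; first by move=> A tA; apply: tc_add; [apply: t1 | apply: t2].
split.
  move=> A B tA tB; rewrite a1 // a2 //.
  by apply: funext => i; apply: funext => j; rewrite /opadd addrACA.
split.
  move=> c A tA; rewrite s1 // s2 //.
  by apply: funext => i; apply: funext => j; rewrite /opadd /opscale mulrDr.
split.
  exists (c1 + c2) => A tA.
  apply: le_trans (tn_add (t1 _ tA) (t2 _ tA)) _.
  by rewrite mulrDl; apply: lerD; [apply: hc1 | apply: hc2].
move=> n B tB pB.
exact: (pb_add (cp1 n B tB pB) (cp2 n B tB pB)).
Qed.

End CP.

Section Enum.
Variable R : realType.
Local Notation C := R[i].

Lemma enum_pick (W : countType) (g : W -> C) w : enum_seq g (pickle w) = g w.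
Proof. by rewrite /enum_seq pickleK_inv. Qed.

Lemma pickle_eq (W : countType) (w w' : W) : (pickle w == pickle w') = (w == w').
Proof. exact: (inj_eq (pcan_inj pickleK_inv)). Qed.

Lemma enum_inv (W : countType) n (w : W) : @pickle_inv W n = Some w -> n = pickle w.
Proof. by move=> E; have := @pickle_invK W n; rewrite E /= => <-. Qed.

Lemma enum_notpick (W : countType) n (w : W) : @pickle_inv W n = None -> (n == pickle w) = false.
Proof. by move=> E; apply/eqP => e; move: E; rewrite e pickleK_inv. Qed.

Lemma enum_two (J : countType) (g : option J -> C) j :
  (forall k, k <> j -> g (Some k) = 0) ->
  forall n, enum_seq g n = (if n == pickle (Some j) then g (Some j) else 0) +
                           (if n == pickle (None : option J) then g None else 0).
Proof.
move=> h n; rewrite /enum_seq; case E: (pickle_inv n) => [w|]; last first.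
  by rewrite !(enum_notpick _ E) addr0.
rewrite (enum_inv E) !pickle_eq; case: w {E} => [k|] /=; last by rewrite add0r.
case: (eqVneq k j) => [->|ne]; first by rewrite eqxx addr0.
rewrite h; last exact/eqP.
by case: eqP => [[e]|_]; [rewrite e eqxx in ne | rewrite addr0].
Qed.

Lemma enum_decomp (W : countType) (g2 gI g' : W -> C) w0 :
  (forall w, w <> w0 -> g2 w = gI w + g' w) -> g2 w0 = g' w0 ->
  forall n, enum_seq g2 n =
    enum_seq gI n - (if n == pickle w0 then gI w0 else 0) + enum_seq g' n.
Proof.
move=> h h0 n; rewrite /enum_seq; case E: (pickle_inv n) => [w|]; last first.
  by rewrite (enum_notpick _ E) subr0 addr0.
rewrite (enum_inv E) pickle_eq; case: (eqVneq w w0) => [->|ne].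
  by rewrite h0 subrr add0r.
by rewrite subr0 h //; apply/eqP.
Qed.

Lemma cabs_opp (a : C) : cabs (- a) = cabs a.
Proof. by case: a => x y; rewrite /cabs /= !sqrrN. Qed.

End Enum.

End Helpers.

Theorem mainTheorem2 (R : realType) (K : set nat) (J : countType)
    (rho : J -> mat R) (f : (J -> R) -> R) (I : option J -> op R) :
  (forall j, density K (rho j)) ->
  evaluation_function f ->
  optimal_uud K rho f I ->
  (* sup_j tr[I_j rho_j] < 1 *)
  (exists c : R, c < 1 /\ forall j, success rho I j <= c) ->
  ~ uniformly_distinguishable K
      (fun j => opscale ((tr (I None (rho j)))^-1) (I None (rho j))).
Proof.
move=> hrho hf [uudI notbetter] [c0 [c0lt hsc]] [I' uudI'].
case: (uudI) => [[bI instI] [orthI [c [cpos hc]]]].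
case: uudI' => [[bI' instI'] [orth' [c' [c'pos hc']]]].
pose t j := tr (I None (rho j)).
pose sig j := opscale ((tr (I None (rho j)))^-1) (I None (rho j)).
pose I2 : option J -> op R := fun w => match w with
  | Some j => fun X => opadd (I (Some j) X) (I' (Some j) (I None X))
  | None => fun X => I' None (I None X) end.
have tcr j : trace_class K (rho j) by case: (hrho j).
have posr j : positive_op (rho j) by case: (hrho j) => _ [].
have trr j : tr (rho j) = 1 by case: (hrho j) => _ [].
have tcI w X : trace_class K X -> trace_class K (I w X) by move=> tX; apply: (bI w).1.
have tcI' w X : trace_class K X -> trace_class K (I' w X) by move=> tX; apply: (bI' w).1.
have imI j : IM (tr (I (Some j) (rho j))) = 0.
  by have := hc j; rewrite lecE => /andP[/eqP -> _].
have spos j : 0 < success rho I j.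
  by have := hc j; rewrite lecE => /andP[_ h]; apply: lt_le_trans h.
have tpos j : 0 < 1 - success rho I j.
  by rewrite subr_gt0; apply: le_lt_trans (hsc j) c0lt.
have ht j : t j = (1 - success rho I j)%:C%C.
  have [_ cv] := instI (rho j) (tcr j).
  have e := enum_two (g := fun w => tr (I w (rho j))) (fun k nk => orthI k j nk).
  have cv2 := cs_add (cs_single (pickle (Some j)) (tr (I (Some j) (rho j))))
                     (cs_single (pickle (None : option J)) (tr (I None (rho j)))).
  have h : tr (I (Some j) (rho j)) + tr (I None (rho j)) = 1.
    rewrite -(trr j) -(cs_unique cv).
    by apply: esym; apply: cs_unique; apply: (cs_ext _ cv2) => n; rewrite e.
  rewrite /t; have -> : tr (I None (rho j)) = 1 - tr (I (Some j) (rho j)).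
    by rewrite -h addrC addKr.
  by rewrite (realC (imI j)) rmorphB rmorph1.
have tnz j : t j != 0.
  rewrite ht; apply/eqP => e; have := congr1 (@complex.Re R) e => /= e'.
  by move: (tpos j); rewrite e' ltxx.
have sigI j : I None (rho j) = opscale (t j) (sig j).
  apply: funext => a; apply: funext => b.
  by rewrite /sig /opscale /t mulrA mulfV ?mul1r // -/(t j).
have tcsig j : trace_class K (sig j) by apply: tc_scale; apply: tcI.
have key j k : tr (I2 (Some j) (rho k)) =
    tr (I (Some j) (rho k)) + t k * tr (I' (Some j) (sig k)).
  have e1 : I' (Some j) (I None (rho k)) = opscale (t k) (I' (Some j) (sig k)).
    by rewrite sigI (bI' (Some j)).2.2.1.
  have t1 : trace_class K (I (Some j) (rho k)) by apply: tcI.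
  have t2 : trace_class K (I' (Some j) (sig k)) by apply: tcI'.
  rewrite /I2 e1 (tr_add (K:=K)) //; last exact: tc_scale.
  by rewrite (tr_scale (K:=K)).
have bI2 w : bounded_cp_map K (I2 w).
  case: w => [j|].
    exact: (bcp_sum (bI (Some j)) (bcp_comp (bI None) (bI' (Some j)))).
  exact: (bcp_comp (bI None) (bI' None)).
have inst2 : instrument K I2.
  split => // X tX.
  have tY : trace_class K (I None X) by apply: tcI.
  have [[M1 hM1] cv1] := instI X tX.
  have [[M2 hM2] cv2] := instI' (I None X) tY.
  have hw : forall w, w <> None -> tr (I2 w X) = tr (I w X) + tr (I' w (I None X)).
    case=> [j _|//]; rewrite /I2 (tr_add (K:=K)) //; [apply: tcI | apply: tcI'] => //.
  have dec := enum_decomp (g2 := fun w => tr (I2 w X)) (gI := fun w => tr (I w X))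
     (g' := fun w => tr (I' w (I None X))) hw erefl.
  split.
    exists (M1 + cabs (tr (I None X)) + M2) => N.
    apply: (@le_trans _ _ (\sum_(0 <= n < N)
       (cabs (enum_seq (fun w => tr (I w X)) n) +
        cabs (if n == pickle (None : option J) then tr (I None X) else 0) +
        cabs (enum_seq (fun w => tr (I' w (I None X))) n)))).
      apply: ler_sum => n _; rewrite dec; apply: le_trans (cabs_add _ _) _.
      apply: lerD => //; apply: le_trans (cabs_add _ _) _.
      by rewrite cabs_opp.
    rewrite !big_split /=; apply: lerD; first apply: lerD.
    - exact: hM1.
    - exact: psum_single_le.
    - exact: hM2.
  have h := cs_add (cs_add cv1 (cs_opp (cs_single (pickle (None : option J)) (tr (I None X))))) cv2.
  rewrite subrK in h.
  by apply: (cs_ext _ h) => n; rewrite dec.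
have uud2 : uud_measurement K rho I2.
  split => //; split.
    move=> j k jk; rewrite key (orthI _ _ jk).
    by have := orth' _ _ jk; rewrite /= -/(sig k) => ->; rewrite mulr0 addr0.
  exists c; split => // j; rewrite key.
  rewrite -[c%:C%C]addr0; apply: lerD; first exact: hc.
  apply: mulr_ge0; first by rewrite ht ler0c; exact: ltW.
  apply: le_trans (hc' j); rewrite ler0c; exact: ltW.
have lbs j : c' <= RE (tr (I' (Some j) (sig j))).
  by have := hc' j; rewrite lecE => /andP[_].
have succ2 j : success rho I2 j =
    success rho I j + (1 - success rho I j) * RE (tr (I' (Some j) (sig j))).
  by rewrite /success key ReD ht ReRM.
have le1 j : success rho I2 j <= 1.
  have [_ [cvR _]] := inst2.2 (rho j) (tcr j).
  rewrite trr in cvR.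
  have := rs_le_term (pickle (Some j)) _ cvR.
  rewrite enum_pick; apply => n; rewrite /enum_seq.
  case: pickle_inv => [w|]; last by rewrite lexx.
  exact: (pos_tr (cp_pos (bI2 w) (tcr j) (posr j)) ((bI2 w).1 _ (tcr j))).
apply: notbetter; exists I2; split => //.
rewrite -subr_gt0; apply: hf.
- move=> j; apply/andP; split; last exact: le1.
  rewrite succ2; apply: (lt_le_trans (spos j)); rewrite lerDl.
  apply: mulr_ge0; first exact: ltW.
  by apply: le_trans (lbs j); exact: ltW.
- move=> j; apply/andP; split; first exact: spos.
  by apply: le_trans (hsc j) (ltW c0lt).
- exists ((1 - c0) * c'); split; first by rewrite mulr_gt0 // subr_gt0.
  move=> j; rewrite succ2 addrAC subrr add0r.
  apply: ler_pM => //.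
  + by rewrite subr_ge0 ltW.
  + exact: ltW.
  + by rewrite lerD2l lerN2.
Qed.
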